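(* Let $k$ be a complete non-trivially valued non-Archimedean field. For every $\gamma\in\mathrm{PGL}(2,k)$ there exist two closed balls $B_{\mathrm{att}}(\gamma)$ and $B_{\mathrm{rep}}(\gamma)$ in $\mathbb{P}^{1,an}_k$, each of spherical radius $\|\gamma\|^{-1}$, such that $\gamma\big(\mathbb{P}^{1,an}_k\setminus B_{\mathrm{rep}}(\gamma)\big)\subset B_{\mathrm{att}}(\gamma)$.
   Context: $\mathbb{P}^{1,an}_k$ is the Berkovich projective line (one-point compactification of the space of multiplicative seminorms on $k[Z]$ extending $|\cdot|$) with its natural $\mathrm{PGL}(2,k)$-action. For $0<r\le1$, $\bar B^{an}(0,r)=\{x:|Z|_x\le r\}$; a closed ball of spherical radius $r$ in $\mathbb{P}^{1,an}_k$ is a set $g(\bar B^{an}(0,r))$ with $g$ in the image of $\mathrm{SL}(2,k^\circ)$ in $\mathrm{PGL}(2,k)$ (these are the Berkovich balls whose $k$-points form a closed ball of radius $r$ for the spherical metric $d((z_0{:}z_1),(w_0{:}w_1))=|z_0w_1-z_1w_0|/(\max(|z_0|,|z_1|)\max(|w_0|,|w_1|))$). For $\gamma\in\mathrm{PGL}(2,k)$, $\|\gamma\|$ is the maximum absolute value of the entries of a lift of $\gamma$ to $\mathrm{SL}(2,K)$, $K/k$ at most quadratic (so $\|\gamma\|\ge1$). *)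

(* Defs.v *)
From HB Require Import structures.
From mathcomp Require Import all_boot all_order all_algebra.
From mathcomp Require Import reals.
Set Implicit Arguments. Unset Strict Implicit. Unset Printing Implicit Defensive.
Import Order.TTheory GRing.Theory Num.Theory.
Local Open Scope ring_scope.

Section Berkovich.
Variables (R : realType) (k : fieldType) (abs : k -> R).

Definition is_absval : Prop :=
  [/\ forall x, 0 <= abs x,
      forall x, abs x = 0 <-> x = 0,
      forall x y, abs (x * y) = abs x * abs y &
      forall x y, abs (x + y) <= abs x + abs y].

Definition nonarchimedean : Prop :=
  forall x y, abs (x + y) <= Num.max (abs x) (abs y).

Definition nontrivially_valued : Prop :=
  exists x, abs x != 0 /\ abs x != 1.

Definition abs_complete : Prop :=
  forall u : nat -> k,
    (forall e : R, 0 < e -> exists N, forall m n, (N <= m)%N -> (N <= n)%N ->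
        abs (u m - u n) < e) ->
    exists l : k, forall e : R, 0 < e -> exists N, forall n, (N <= n)%N ->
        abs (u n - l) < e.

Definition complete_nonarch_valued_field : Prop :=
  [/\ is_absval, nonarchimedean, nontrivially_valued & abs_complete].

Definition is_mult_seminorm (s : {poly k} -> R) : Prop :=
  [/\ forall P, 0 <= s P,
      forall P Q, s (P + Q) <= s P + s Q,
      forall P Q, s (P * Q) = s P * s Q &
      forall c, s c%:P = abs c].

(* raw points of P^{1,an}_k: None is the point at infinity,
   Some s is the point of the affine line with seminorm s *)
Definition berk := option ({poly k} -> R).

Definition is_berk (x : berk) : Prop :=
  match x with None => True | Some s => is_mult_seminorm s end.

Definition m00 (M : 'M[k]_2) := M ord0 ord0.
Definition m01 (M : 'M[k]_2) := M ord0 ord_max.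
Definition m10 (M : 'M[k]_2) := M ord_max ord0.
Definition m11 (M : 'M[k]_2) := M ord_max ord_max.

(* (cZ+d)^n P((aZ+b)/(cZ+d)), n = deg P *)
Definition mob_num (M : 'M[k]_2) (P : {poly k}) : {poly k} :=
  \sum_(i < size P) P`_i *: ((m00 M *: 'X + (m01 M)%:P) ^+ i *
                              (m10 M *: 'X + (m11 M)%:P) ^+ ((size P).-1 - i)).

(* action of the class of M = (a b; c d) (z |-> (az+b)/(cz+d)) on P^{1,an}_k:
   (gamma x)(P) = |P o gamma|_x *)
Definition act (M : 'M[k]_2) (x : berk) : berk :=
  match x with
  | None => if m10 M == 0 then None
            else Some (fun P => abs P.[m00 M / m10 M])
  | Some s =>
      let den := s (m10 M *: 'X + (m11 M)%:P) in
      if den == 0 then None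
      else Some (fun P => s (mob_num M P) / den ^+ (size P).-1)
  end.

(* ||gamma||: max of |entries| of a lift to SL(2,K), i.e. of M / sqrt(det M) *)
Definition pgl_norm (M : 'M[k]_2) : R :=
  Num.max (Num.max (abs (m00 M)) (abs (m01 M)))
          (Num.max (abs (m10 M)) (abs (m11 M))) / Num.sqrt (abs (\det M)).

Definition closed_disc0 (r : R) (x : berk) : Prop :=
  match x with None => False | Some s => s 'X <= r end.

(* B is a closed ball of spherical radius r: B = g(\bar B^{an}(0,r)),
   g in the image of SL(2,k°) *)
Definition is_closed_ball (r : R) (B : berk -> Prop) : Prop :=
  exists g : 'M[k]_2,
    [/\ forall i j, abs (g i j) <= 1, \det g = 1 &
        forall y, B y <-> exists x, [/\ is_berk x, closed_disc0 r x & act g x = y]].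

End Berkovich.

(* Main.v *)
From HB Require Import structures.
From mathcomp Require Import all_boot all_order all_algebra.
From mathcomp Require Import reals.
Require Import Defs.
From mathcomp Require Import zify ring lra.
Import Order.TTheory GRing.Theory Num.Theory.
Local Open Scope ring_scope.
Section S.
Context {k : fieldType}.
Lemma det22 (M : 'M[k]_2) : \det M = m00 M * m11 M - m01 M * m10 M.
Proof.
rewrite (expand_det_row _ ord0) !big_ord_recl big_ord0 addr0 /cofactor !det_mx11 /m00 /m01 /m10 /m11.
rewrite !mxE /=.
have e1 : lift ord0 (0 : 'I_1) = ord_max :> 'I_2 by apply: val_inj.
have e2 : lift ord0 (ord0 : 'I_1) = ord_max :> 'I_2 by apply: val_inj.
have e3 : lift (lift ord0 ord0) (0 : 'I_1) = ord0 :> 'I_2 by apply: val_inj.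
rewrite e3 e1 /= expr0 expr1 mul1r mulN1r mulrN.
by [].
Qed.
Lemma mulmx00 (A B : 'M[k]_2) : m00 (A *m B) = m00 A * m00 B + m01 A * m10 B.
Proof.
rewrite /m00 /m01 /m10 mxE !big_ord_recl big_ord0 addr0.
by rewrite (_ : lift ord0 ord0 = ord_max :> 'I_2) //; apply: val_inj.
Qed.
Lemma mulmx01 (A B : 'M[k]_2) : m01 (A *m B) = m00 A * m01 B + m01 A * m11 B.
Proof.
rewrite /m00 /m01 /m11 mxE !big_ord_recl big_ord0 addr0.
by rewrite (_ : lift ord0 ord0 = ord_max :> 'I_2) //; apply: val_inj.
Qed.
Lemma mulmx10 (A B : 'M[k]_2) : m10 (A *m B) = m10 A * m00 B + m11 A * m10 B.
Proof.
rewrite /m00 /m11 /m10 mxE !big_ord_recl big_ord0 addr0.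
by rewrite (_ : lift ord0 ord0 = ord_max :> 'I_2) //; apply: val_inj.
Qed.
Lemma mulmx11 (A B : 'M[k]_2) : m11 (A *m B) = m10 A * m01 B + m11 A * m11 B.
Proof.
rewrite /m01 /m11 /m10 mxE !big_ord_recl big_ord0 addr0.
by rewrite (_ : lift ord0 ord0 = ord_max :> 'I_2) //; apply: val_inj.
Qed.
Definition mk (a b c d : k) : 'M[k]_2 :=
  \matrix_(i < 2, j < 2) if (i : nat) == 0%N then (if (j : nat) == 0%N then a else b)
                        else (if (j : nat) == 0%N then c else d).
Lemma mkE a b c d : [/\ m00 (mk a b c d) = a, m01 (mk a b c d) = b,
   m10 (mk a b c d) = c & m11 (mk a b c d) = d].
Proof. by rewrite /m00 /m01 /m10 /m11 !mxE. Qed.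
Lemma mk_bound (P : k -> Prop) a b c d : P a -> P b -> P c -> P d ->
  forall i j, P (mk a b c d i j).
Proof. move=> ? ? ? ? i j; rewrite mxE; by case: ifP; case: ifP. Qed.

Definition uM (M : 'M[k]_2) : {poly k} := m00 M *: 'X + (m01 M)%:P.
Definition vM (M : 'M[k]_2) : {poly k} := m10 M *: 'X + (m11 M)%:P.
Definition H (M : 'M[k]_2) (n : nat) (P : {poly k}) : {poly k} :=
  \sum_(i < n.+1) P`_i *: (uM M ^+ i * vM M ^+ (n - i)).

Lemma sum_widen (W : zmodType) (G : nat -> W) m n : (m <= n)%N ->
  (forall i, (m <= i)%N -> G i = 0) -> \sum_(i < n) G i = \sum_(i < m) G i.
Proof.
move=> mn G0; rewrite -!(big_mkord xpredT) (@big_cat_nat _ _ _ m 0 n _ _ (leq0n m) mn) /=.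
have -> : \sum_(m <= i < n) G i = 0.
  by rewrite big_nat_cond big1 // => i /andP[/andP[hi _] _]; exact: G0.
by rewrite addr0.
Qed.

Lemma H_widen M n (P : {poly k}) : (size P <= n.+1)%N ->
  H M n P = \sum_(i < size P) P`_i *: (uM M ^+ i * vM M ^+ (n - i)).
Proof.
move=> hs; rewrite /H (@sum_widen _ (fun i => P`_i *: (uM M ^+ i * vM M ^+ (n - i))) (size P)) //.
by move=> i hi; rewrite nth_default // scale0r.
Qed.

Lemma mobH M (P : {poly k}) : mob_num M P = H M (size P).-1 P.
Proof. by rewrite H_widen ?leqSpred. Qed.

Lemma size_lin (a b : k) : (size (a *: 'X + b%:P)%R <= 2)%N.
Proof.
eapply leq_trans; first exact: size_polyD.
 rewrite geq_max; apply/andP; split.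
  by eapply leq_trans; first exact: size_scale_leq; rewrite size_polyX.
by apply: leq_trans (size_polyC_leq1 b) _.
Qed.

Lemma size_u M : (size (uM M) <= 2)%N. Proof. exact: size_lin. Qed.
Lemma size_v M : (size (vM M) <= 2)%N. Proof. exact: size_lin. Qed.

Lemma size_pow_lin (p : {poly k}) i : (size p <= 2)%N -> (size (p ^+ i)%R <= i.+1)%N.
Proof.
move=> hp; eapply leq_trans; first exact: size_poly_exp_leq.
rewrite ltnS; case: (size p) hp => [|[|[|]]] //= _; by rewrite ?mul0n ?mul1n.
Qed.

Lemma H_S M n (P : {poly k}) : (size P <= n.+1)%N -> H M n.+1 P = vM M * H M n P.
Proof.
move=> hs; rewrite !H_widen ?(leq_trans hs) // mulr_sumr; apply: eq_bigr => i _.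
rewrite -scalerAr; congr (_ *: _).
have hi : (i <= n)%N by rewrite -ltnS (leq_trans (ltn_ord i)).
by rewrite subSn // exprS mulrCA.
Qed.

Lemma H_lift M n m (P : {poly k}) : (size P <= n.+1)%N ->
  H M (m + n) P = vM M ^+ m * H M n P.
Proof.
move=> hs; elim: m => [|m IH]; first by rewrite mul1r.
rewrite addSn H_S ?IH ?exprS ?mulrA //.
by rewrite (leq_trans hs) // ltnS leq_addl.
Qed.

Lemma H_add M n (P Q : {poly k}) : H M n (P + Q) = H M n P + H M n Q.
Proof. by rewrite /H -big_split; apply: eq_bigr => i _; rewrite coefD scalerDl. Qed.

Lemma H_scale M n c (P : {poly k}) : H M n (c *: P) = c *: H M n P.
Proof. by rewrite /H scaler_sumr; apply: eq_bigr => i _; rewrite coefZ scalerA. Qed.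

Lemma H_0 M n : H M n 0 = 0.
Proof. by rewrite /H big1 // => i _; rewrite coef0 scale0r. Qed.

Lemma H_sum M n (I : Type) (r : seq I) (Pr : pred I) (F : I -> {poly k}) :
  H M n (\sum_(i <- r | Pr i) F i) = \sum_(i <- r | Pr i) H M n (F i).
Proof.
apply: (big_ind2 (fun P Q => H M n P = Q)); first exact: H_0.
  by move=> ? ? ? ? <- <-; rewrite H_add.
by [].
Qed.

Lemma H_XnC M n i c : (i <= n)%N -> H M n (c *: 'X^i) = c *: (uM M ^+ i * vM M ^+ (n - i)).
Proof.
move=> hi; rewrite H_scale; congr (_ *: _).
rewrite /H (bigD1 (Ordinal (hi : (i < n.+1)%N))) //= coefXn eqxx scale1r big1 ?addr0 //.
move=> j hj; rewrite coefXn.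
case: eqP => [e|]; last by rewrite scale0r.
by case/eqP: hj; apply: val_inj.
Qed.

Lemma size_H M n P : (size (H M n P) <= n.+1)%N.
Proof.
rewrite /H; apply: (big_ind (fun p : {poly k} => (size p <= n.+1)%N)).
- by rewrite size_poly0.
- move=> p q hp hq; eapply leq_trans; first exact: size_polyD.
  by rewrite geq_max hp hq.
move=> i _; eapply leq_trans; first exact: size_scale_leq.
eapply leq_trans; first exact: size_polyMleq.
have h1 := size_pow_lin (uM M) i (size_u M).
have h2 := size_pow_lin (vM M) (n - i) (size_v M).
have hi : (i <= n)%N by rewrite -ltnS.
move: h1 h2 hi; set a := size _; set b := size _; lia.
Qed.

Lemma polyE (P : {poly k}) m : (size P <= m)%N -> P = \sum_(i < m) P`_i *: 'X^i.
Proof.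
move=> hs; rewrite (@sum_widen _ (fun i => P`_i *: 'X^i) (size P)) //.
  by rewrite -poly_def coefK.
by move=> i hi; rewrite nth_default // scale0r.
Qed.

Lemma H_mul M m n (P Q : {poly k}) : (size P <= m.+1)%N -> (size Q <= n.+1)%N ->
  H M (m + n) (P * Q) = H M m P * H M n Q.
Proof.
move=> hP hQ; have eP := polyE _ _ hP; have eQ := polyE _ _ hQ.
rewrite [in LHS]eP [in LHS]eQ mulr_suml.
rewrite (H_sum M (m + n)) [H M m P]/H [H M n Q]/H mulr_suml; apply: eq_bigr => i _.
rewrite mulr_sumr (H_sum M (m + n)) mulr_sumr; apply: eq_bigr => j _.
have hi : (i <= m)%N by rewrite -ltnS. have hj : (j <= n)%N by rewrite -ltnS.
rewrite -scalerAl -scalerAr scalerA -exprD H_XnC; last by rewrite leq_add.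
rewrite -scalerAl -scalerAr scalerA; congr (_ *: _).
have -> : (m + n - (i + j) = (m - i) + (n - j))%N by lia.
by rewrite !exprD mulrACA.
Qed.

Lemma H_pow M (p : {poly k}) i : (size p <= 2)%N -> H M i (p ^+ i) = (H M 1 p) ^+ i.
Proof.
move=> hp; elim: i => [|i IH].
  by rewrite !expr0 /H big_ord1 coef1 /= scale1r mul1r expr0.
by rewrite exprS (H_mul M 1 i) ?IH ?exprS // size_pow_lin.
Qed.

Lemma H1_lin M (a b : k) : H M 1 (a *: 'X + b%:P) = a *: uM M + b *: vM M.
Proof.
rewrite H_add -(expr1 'X) H_XnC // -[b%:P]mulr1 mul_polyC -(expr0 'X) H_XnC //.
by rewrite !subnn !expr0 !mulr1 subn0 !expr1 mul1r addrC.
Qed.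

Lemma uv_mul (A B : 'M[k]_2) :
  uM (A *m B) = m00 A *: uM B + m01 A *: vM B /\
  vM (A *m B) = m10 A *: uM B + m11 A *: vM B.
Proof.
rewrite /uM /vM mulmx00 mulmx01 mulmx10 mulmx11 -!mul_polyC !polyCD !polyCM.
split; ring.
Qed.

Lemma H_comp (A B : 'M[k]_2) n P : H B n (H A n P) = H (A *m B) n P.
Proof.
have [eu ev] := uv_mul A B.
rewrite [H A n P]/H (H_sum B n) [H (A *m B) n P]/H; apply: eq_bigr => i _.
rewrite H_scale; congr (_ *: _).
have hi : (i <= n)%N by rewrite -ltnS.
move: (nat_of_ord i) hi => {}i hi.
have hu := size_pow_lin (uM A) i (size_u A).
have hv := size_pow_lin (vM A) (n - i) (size_v A).
have e : n = (i + (n - i))%N by rewrite subnKC.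
rewrite {1}e (H_mul B i (n - i) _ _ hu hv).
rewrite (H_pow B (uM A) i (size_u A)) (H_pow B (vM A) (n - i) (size_v A)).
by rewrite eu ev /uM /vM !H1_lin.
Qed.

Lemma H_eval M n (P : {poly k}) x : (size P <= n.+1)%N -> (vM M).[x] != 0 ->
  (H M n P).[x] = (vM M).[x] ^+ n * P.[(uM M).[x] / (vM M).[x]].
Proof.
move=> hs hv; rewrite H_widen // horner_sum (horner_coef P) mulr_sumr.
apply: eq_bigr => i _; rewrite hornerZ hornerM !horner_exp.
have hi : (i <= n)%N by rewrite -ltnS (leq_trans (ltn_ord i)).
move: (nat_of_ord i) hi => {}i hi.
rewrite -{2}(subnKC hi) exprD expr_div_n.
set a := (uM M).[x]; set b := (vM M).[x].
have hbi : b ^+ i != 0 by rewrite expf_neq0.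
rewrite [RHS]mulrC -!mulrA; congr (_ * _).
by rewrite mulKf.
Qed.

Lemma hornerU M x : (uM M).[x] = m00 M * x + m01 M.
Proof. by rewrite /uM hornerD hornerZ hornerX hornerC. Qed.
Lemma hornerV M x : (vM M).[x] = m10 M * x + m11 M.
Proof. by rewrite /vM hornerD hornerZ hornerX hornerC. Qed.
End S.
From Stdlib Require Import FunctionalExtensionality.
Section A.
Variables (R : realType) (k : fieldType) (abs : k -> R).
Hypothesis abs_ge0 : forall x, 0 <= abs x.
Hypothesis abs_eq0 : forall x, abs x = 0 <-> x = 0.
Hypothesis absM : forall x y, abs (x * y) = abs x * abs y.
Hypothesis absD : forall x y, abs (x + y) <= abs x + abs y.

Lemma abs_eq0b x : (abs x == 0) = (x == 0).
Proof. by apply/eqP/eqP => /abs_eq0. Qed.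
Lemma abs_neq0 x : (abs x != 0) = (x != 0).
Proof. by rewrite abs_eq0b. Qed.

Lemma abs1 : abs 1 = 1.
Proof.
have h : abs 1 * (abs 1 - 1) = 0 by rewrite mulrBr mulr1 -absM mulr1 subrr.
move/eqP: h; rewrite mulf_eq0 subr_eq0 abs_eq0b oner_eq0 /=; by move/eqP.
Qed.

Lemma absN1 : abs (-1) = 1.
Proof.
have h : abs (-1) ^+ 2 = 1 ^+ 2 by rewrite expr2 -absM mulrNN mulr1 abs1 expr1n.
by move/eqP: h; rewrite eqrXn2 ?abs_ge0 // => /eqP.
Qed.

Lemma absN x : abs (- x) = abs x.
Proof. by rewrite -mulN1r absM absN1 mul1r. Qed.

Lemma absX x n : abs (x ^+ n) = abs x ^+ n.
Proof. by elim: n => [|n IH]; rewrite ?expr0 ?abs1 // !exprS absM IH. Qed.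

Section Semi.
Context {s : {poly k} -> R} (hs : is_mult_seminorm abs s).

Lemma s_ge0 P : 0 <= s P. Proof. by case: hs. Qed.
Lemma sD P Q : s (P + Q) <= s P + s Q. Proof. by case: hs. Qed.
Lemma sM P Q : s (P * Q) = s P * s Q. Proof. by case: hs. Qed.
Lemma sC c : s c%:P = abs c. Proof. by case: hs. Qed.
Lemma s1 : s 1 = 1. Proof. by rewrite -polyC1 sC abs1. Qed.
Lemma sZ c P : s (c *: P) = abs c * s P. Proof. by rewrite -mul_polyC sM sC. Qed.
Lemma sX P n : s (P ^+ n) = s P ^+ n.
Proof. by elim: n => [|n IH]; rewrite ?expr0 ?s1 // !exprS sM IH. Qed.
Lemma sN P : s (- P) = s P. Proof. by rewrite -scaleN1r sZ absN1 mul1r. Qed.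
Lemma s_add0 P Q : s Q = 0 -> s (P + Q) = s P.
Proof.
move=> h; apply/eqP; rewrite eq_le; apply/andP; split.
  by rewrite -[X in _ <= X]addr0 -h sD.
have e : P = (P + Q) + (- Q) by rewrite addrK.
by rewrite {1}e -[X in _ <= X]addr0 -h -(sN Q) sD.
Qed.

Lemma s_root c d : s (c *: 'X + d%:P) = 0 -> c != 0 ->
  forall P, s P = abs P.[- d / c].
Proof.
move=> h0 hc P; set g := - d / c.
have e1 : c *: 'X + d%:P = c *: ('X - g%:P).
  rewrite scalerBr -mul_polyC -[c *: g%:P]mul_polyC -polyCM /g.

  by rewrite mulrCA divff // mulr1 polyCN opprK.
have h1 : s ('X - g%:P) = 0.
  move: h0; rewrite e1 sZ => /eqP; rewrite mulf_eq0 abs_eq0b (negbTE hc) /=.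
  by move/eqP.
have : root (P - P.[g]%:P) g by rewrite /root hornerD hornerN hornerC subrr.
case/factor_theorem => q hq.
have -> : P = P.[g]%:P + q * ('X - g%:P) by rewrite -hq addrC subrK.
by rewrite s_add0 ?sC ?hornerD ?hornerM ?hornerC ?hornerXsubC ?subrr ?mulr0 ?addr0 // sM h1 mulr0.
Qed.

Lemma act_val M n (P : {poly k}) : s (vM M) != 0 -> (size P <= n.+1)%N ->
  s (mob_num M P) / s (vM M) ^+ (size P).-1 = s (H M n P) / s (vM M) ^+ n.
Proof.
move=> hv hsz; rewrite mobH.
have e : n = ((n - (size P).-1) + (size P).-1)%N by move: hsz; lia.

rewrite [in RHS]e H_lift ?leqSpred // sM sX exprD invfM mulrACA divff ?mul1r //.

by rewrite expf_neq0.
Qed.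
End Semi.

Lemma act_SomeE M s : act abs M (Some s) =
  if s (vM M) == 0 then None
  else Some (fun P => s (mob_num M P) / s (vM M) ^+ (size P).-1).
Proof. by []. Qed.

Lemma act_NoneE M : act abs M None =
  if m10 M == 0 then None else Some (fun P => abs P.[m00 M / m10 M]).
Proof. by []. Qed.

Lemma eval_berk (b : k) : is_mult_seminorm abs (fun P => abs P.[b]).
Proof.
split => [P|P Q|P Q|c]; rewrite ?abs_ge0 ?hornerD ?absD ?hornerM ?absM ?hornerC //.
Qed.

Lemma act_berk M x : is_berk abs x -> is_berk abs (act abs M x).
Proof.
case: x => [s|] hx; last by rewrite act_NoneE; case: ifP => // _; exact: eval_berk.
rewrite act_SomeE; case: eqP => // /eqP hv /=.
have hs := hx.
split => [P|P Q|P Q|c].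
- by apply: divr_ge0; rewrite ?exprn_ge0 // (s_ge0 hs).
- set N := (maxn (size P) (size Q)).-1.
  have hP : (size P <= N.+1)%N by rewrite /N; lia.
  have hQ : (size Q <= N.+1)%N by rewrite /N; lia.
  have hPQ : (size (P + Q)%R <= N.+1)%N.
    by rewrite (leq_trans (size_polyD _ _)) // /N; lia.
  rewrite !(act_val hs M N) // H_add -mulrDl ler_wpM2r ?invr_ge0 ?exprn_ge0 ?(s_ge0 hs) //.
  exact: (sD hs).
- set m := (size P).-1; set n := (size Q).-1.
  have hPQ : (size (P * Q)%R <= (m + n).+1)%N.
    by rewrite (leq_trans (size_polyMleq _ _)) // /m /n; lia.
  rewrite (act_val hs M (m + n)) // H_mul ?leqSpred // !mobH -/m -/n (sM hs).
  by rewrite exprD invfM mulrACA.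
- rewrite (act_val hs M 0) ?size_polyC_leq1 // expr0 divr1.
  by rewrite /H big_ord1 coefC /= !expr0 mulr1 alg_polyC (sC hs).
Qed.

Lemma act_ext (A B : 'M[k]_2) x : m00 A = m00 B -> m01 A = m01 B ->
  m10 A = m10 B -> m11 A = m11 B -> act abs A x = act abs B x.
Proof. by move=> e1 e2 e3 e4; rewrite /act /mob_num e1 e2 e3 e4. Qed.

Lemma act_id (M : 'M[k]_2) x : m00 M = 1 -> m01 M = 0 -> m10 M = 0 -> m11 M = 1 ->
  is_berk abs x -> act abs M x = x.
Proof.
move=> e1 e2 e3 e4; case: x => [s|] hx; last by rewrite act_NoneE e3 eqxx.
have hv : vM M = 1 by rewrite /vM e3 e4 scale0r add0r.
have hu : uM M = 'X by rewrite /uM e1 e2 scale1r addr0.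
rewrite act_SomeE hv (s1 hx) oner_eq0; congr Some; apply: functional_extensionality => P.
rewrite expr1n divr1 mobH /H hu hv; congr s.
rewrite [RHS](polyE P ((size P).-1.+1)) ?leqSpred //.
by apply: eq_bigr => i _; rewrite expr1n mulr1.
Qed.

Lemma abs0 : abs 0 = 0. Proof. exact/abs_eq0. Qed.

Lemma act_comp (A B : 'M[k]_2) x : \det B != 0 -> is_berk abs x ->
  act abs A (act abs B x) = act abs (A *m B) x.
Proof.
rewrite det22 => hdet.
have [eu ev] := uv_mul A B.
case: x => [s|] hx.
- rewrite act_SomeE [act abs (A *m B) _]act_SomeE.
  case: (eqVneq (s (vM B)) 0) => hB.
  + rewrite act_NoneE.
    have hc : m10 B != 0.
      apply/eqP => hc; move: hB; rewrite /vM hc scale0r add0r (sC hx) => /abs_eq0 hd.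
      by move: hdet; rewrite hd hc !mulr0 subrr eqxx.
    have hev := s_root hx (m10 B) (m11 B) hB hc.
    set g := - m11 B / m10 B in hev.
    have hvg : (vM B).[g] = 0 by rewrite hornerV /g mulrCA divff // mulr1 addNr.
    have hug : (uM B).[g] != 0.
      apply: contraNneq hdet => h.
      have -> : m00 B * m11 B - m01 B * m10 B = - ((uM B).[g] * m10 B).
        by rewrite hornerU /g; field.
      by rewrite h mul0r oppr0.
    have hvAB : (vM (A *m B)).[g] = m10 A * (uM B).[g].
      by rewrite ev hornerD !hornerZ hvg mulr0 addr0.
    have huAB : (uM (A *m B)).[g] = m00 A * (uM B).[g].
      by rewrite eu hornerD !hornerZ hvg mulr0 addr0.
    rewrite hev hvAB.
    case: (eqVneq (m10 A) 0) => hA; first by rewrite hA mul0r abs0 eqxx.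
    have hc0 : m10 A * (uM B).[g] != 0 by rewrite mulf_neq0.
    rewrite abs_eq0b (negbTE hc0); congr Some.
    apply: functional_extensionality => P.
    rewrite hev mobH H_eval ?leqSpred //; last by rewrite hvAB.
    set c := m10 A * (uM B).[g] in hc0 *.
    rewrite hvAB huAB -/c absM absX [_ * abs _]mulrC mulfK; last first.
      by rewrite expf_neq0 // abs_neq0.
    by rewrite /c -mulf_div divff // mulr1.
  +
 rewrite act_SomeE.
    have e1 : s (mob_num B (vM A)) / s (vM B) ^+ (size (vM A)).-1 =
              s (vM (A *m B)) / s (vM B).
      rewrite (act_val hx B 1) ?size_v // expr1 ev; congr (s _ / _); exact: H1_lin.
    rewrite e1 mulf_eq0 invr_eq0 (negbTE hB) orbF.
    case: (eqVneq (s (vM (A *m B))) 0) => hAB; first by [].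
    congr Some; apply: functional_extensionality => P.
    set n := (size P).-1.
    rewrite (act_val hx B n _ hB); last by rewrite mobH size_H.
    rewrite !mobH -/n H_comp.
    by rewrite expr_div_n invf_div mulrA divfK // expf_neq0.
- rewrite [act abs B None]act_NoneE [act abs (A *m B) None]act_NoneE mulmx10 mulmx00.
  case: (eqVneq (m10 B) 0) => hB.
  + rewrite act_NoneE hB !mulr0 !addr0.
    have ha : m00 B != 0 by apply: contraNneq hdet => h; rewrite h hB mul0r mulr0 subrr.
    case: (eqVneq (m10 A) 0) => hA; first by rewrite hA mul0r eqxx.
    rewrite mulf_eq0 (negbTE hA) (negbTE ha) /=; congr Some.
    apply: functional_extensionality => P.
    by rewrite invfM mulrACA divff // mulr1.
  + rewrite act_SomeE /=.
    set b := m00 B / m10 B.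
    have e2 : m10 A * m00 B + m11 A * m10 B = m10 B * (vM A).[b].
      by rewrite hornerV /b; field.
    have e3 : m00 A * m00 B + m01 A * m10 B = m10 B * (uM A).[b].
      by rewrite hornerU /b; field.
    rewrite e2 e3 mulf_eq0 (negbTE hB) /= abs_eq0b.
    case: (eqVneq ((vM A).[b]) 0) => hv; first by [].
    congr Some; apply: functional_extensionality => P.
    rewrite mobH H_eval ?leqSpred // absM absX [_ * abs _]mulrC mulfK.
      by rewrite -mulf_div divff // mul1r.
    by rewrite expf_neq0 // abs_neq0.
Qed.

Lemma mk00 (a b c d : k) : m00 (mk a b c d) = a. Proof. by rewrite /m00 mxE. Qed.
Lemma mk01 (a b c d : k) : m01 (mk a b c d) = b. Proof. by rewrite /m01 mxE. Qed.
Lemma mk10 (a b c d : k) : m10 (mk a b c d) = c. Proof. by rewrite /m10 mxE. Qed.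
Lemma mk11 (a b c d : k) : m11 (mk a b c d) = d. Proof. by rewrite /m11 mxE. Qed.

Lemma gen (M G K2 K2i : 'M[k]_2) (a' d' : k) (r : R) :
  (forall i j, abs (G i j) <= 1) -> \det G = 1 ->
  (forall i j, abs (K2i i j) <= 1) -> \det K2i = 1 ->
  m00 (K2i *m K2) = 1 -> m01 (K2i *m K2) = 0 ->
  m10 (K2i *m K2) = 0 -> m11 (K2i *m K2) = 1 ->
  \det K2 != 0 -> a' != 0 -> d' != 0 ->
  m00 (G *m (mk 0 d' (- a') 0 *m K2)) = m00 M ->
  m01 (G *m (mk 0 d' (- a') 0 *m K2)) = m01 M ->
  m10 (G *m (mk 0 d' (- a') 0 *m K2)) = m10 M ->
  m11 (G *m (mk 0 d' (- a') 0 *m K2)) = m11 M ->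
  0 <= r -> abs d' <= abs a' * r ^+ 2 ->
  exists Batt Brep : berk R k -> Prop,
    [/\ is_closed_ball abs r Batt, is_closed_ball abs r Brep &
        forall x, is_berk abs x -> ~ Brep x -> Batt (act abs M x)].
Proof.
move=> hGb hGd hKb hKd i1 i2 i3 i4 hK2 ha hd e1 e2 e3 e4 hr hineq.
set E := mk 0 d' (- a') 0.
exists (fun y => exists x, [/\ is_berk abs x, closed_disc0 r x & act abs G x = y]).
exists (fun y => exists x, [/\ is_berk abs x, closed_disc0 r x & act abs K2i x = y]).
split; first by exists G.
  by exists K2i.
move=> x hx hnot.
have [y ey] : exists y, y = act abs K2 x by eexists.
have hy : is_berk abs y by rewrite ey; exact: act_berk.
have hyx : act abs K2i y = x by rewrite ey act_comp // act_id.
have hyd : ~ closed_disc0 r y by move=> hd'; apply: hnot; exists y; split.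
have hE : \det E != 0.
  by rewrite det22 /E mk00 mk01 mk10 mk11 mul0r sub0r mulrN opprK mulf_neq0.
exists (act abs E y); split.
- exact: act_berk.
- case: y hy hyd {ey hyx} => [s|] hy hyd; last first.
    rewrite act_NoneE /E mk10 oppr_eq0 (negbTE ha) /= hornerX mk00 mul0r abs0 //.
  have hsX : r < s 'X by rewrite ltNge; apply/negP.
  have hvE : s (vM E) = abs a' * s 'X.
    by rewrite /vM /E mk10 mk11 polyC0 addr0 (sZ hy) absN.
  have hsX0 : 0 < s 'X by apply: le_lt_trans hsX.
  have hvE0 : s (vM E) != 0.
    by rewrite hvE mulf_neq0 ?abs_neq0 // gt_eqF.
  rewrite act_SomeE (negbTE hvE0) /= (act_val hy E 1) ?size_polyX // expr1.
  have -> : H E 1 'X = uM E.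
    by rewrite -['X]scale1r -(expr1 'X) H_XnC // scale1r expr1 subnn expr0 mulr1.
  rewrite /uM /E mk00 mk01 scale0r add0r (sC hy) hvE.
  have ha0 : 0 < abs a' by rewrite lt_neqAle abs_ge0 eq_sym abs_neq0 ha.
  rewrite ler_pdivrMr; last by rewrite mulr_gt0.
  apply: (le_trans hineq).
  rewrite expr2 mulrA mulrC ler_wpM2l // ler_wpM2l ?abs_ge0 //.
  exact: ltW.
- rewrite ey (act_comp E K2) // (act_comp G (E *m K2)); last first.
  + exact: hx.
  + by rewrite det_mulmx mulf_neq0.
  exact: act_ext.
Qed.

Lemma abs_inv p : p != 0 -> abs p^-1 = (abs p)^-1.
Proof.
move=> hp; have h : abs p * abs p^-1 = 1 by rewrite -absM divff // abs1.
have hp' : abs p != 0 by rewrite abs_neq0.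
by rewrite -[abs p^-1]mul1r -(mulVf hp') -mulrA h mulr1.
Qed.

Lemma abs_div_le1 x p : p != 0 -> abs x <= abs p -> abs (x / p) <= 1.
Proof.
move=> hp hx; have hp0 : 0 < abs p by rewrite lt_neqAle abs_ge0 eq_sym abs_neq0 hp.
by rewrite absM abs_inv // ler_pdivrMr // mul1r.
Qed.

Lemma abs_ndiv_le1 x p : p != 0 -> abs x <= abs p -> abs (- (x / p)) <= 1.
Proof. by move=> hp hx; rewrite absN abs_div_le1. Qed.

Lemma abs0le1 : abs 0 <= 1. Proof. by rewrite abs0 ler01. Qed.
Lemma abs1le1 : abs 1 <= 1. Proof. by rewrite abs1. Qed.
Lemma absN1le1 : abs (-1) <= 1. Proof. by rewrite absN1. Qed.

Definition concl (M : 'M[k]_2) (r : R) :=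
  exists Batt Brep : berk R k -> Prop,
    [/\ is_closed_ball abs r Batt, is_closed_ball abs r Brep &
        forall x, is_berk abs x -> ~ Brep x -> Batt (act abs M x)].

Ltac ent := rewrite ?det22; do 2! rewrite ?mulmx00 ?mulmx01 ?mulmx10 ?mulmx11;
  rewrite ?mk00 ?mk01 ?mk10 ?mk11;
  first [ring | field]; try done.
Ltac bnd := apply: (mk_bound (fun x => abs x <= 1));
  rewrite ?abs0le1 ?abs1le1 ?absN1le1 ?abs_div_le1 ?abs_ndiv_le1 //.

Lemma case00 M r : \det M != 0 -> m00 M != 0 -> abs (m01 M) <= abs (m00 M) ->
  abs (m10 M) <= abs (m00 M) -> abs (m11 M) <= abs (m00 M) -> 0 <= r ->
  abs (\det M / m00 M) <= abs (m00 M) * r ^+ 2 -> concl M r.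
Proof.
move=> hdet ha hb hc hd hr hineq.
apply: (gen M (mk 0 (-1) 1 (- (m10 M / m00 M))) (mk 1 (m01 M / m00 M) 0 1)
  (mk 1 (- (m01 M / m00 M)) 0 1) (m00 M) (\det M / m00 M) r) => //.
- by bnd.
- by ent.
- by bnd.
- by ent.
- by ent.
- by ent.
- by ent.
- by ent.
- by rewrite det22 mk00 mk01 mk10 mk11 mulr0 subr0 mulr1 oner_eq0.
- by rewrite mulf_neq0 ?invr_eq0.
- by ent.
- by ent.
- by ent.
- by ent.
Qed.

Lemma case01 M r : \det M != 0 -> m01 M != 0 -> abs (m00 M) <= abs (m01 M) ->
  abs (m10 M) <= abs (m01 M) -> abs (m11 M) <= abs (m01 M) -> 0 <= r ->
  abs (\det M / m01 M) <= abs (m01 M) * r ^+ 2 -> concl M r.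
Proof.
move=> hdet hb ha hc hd hr hineq.
apply: (gen M (mk 0 (-1) 1 (- (m11 M / m01 M))) (mk (m00 M / m01 M) 1 (-1) 0)
  (mk 0 (-1) 1 (m00 M / m01 M)) (m01 M) (\det M / m01 M) r) => //.
- by bnd.
- by ent.
- by bnd.
- by ent.
- by ent.
- by ent.
- by ent.
- by ent.
- by rewrite (_ : \det _ = 1) ?oner_eq0 //; ent.
- by rewrite mulf_neq0 ?invr_eq0.
- by ent.
- by ent.
- by ent.
- by ent.
Qed.

Lemma case10 M r : \det M != 0 -> m10 M != 0 -> abs (m00 M) <= abs (m10 M) ->
  abs (m01 M) <= abs (m10 M) -> abs (m11 M) <= abs (m10 M) -> 0 <= r ->
  abs (\det M / m10 M) <= abs (m10 M) * r ^+ 2 -> concl M r.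
Proof.
move=> hdet hc ha hb hd hr hineq.
apply: (gen M (mk (-1) (- (m00 M / m10 M)) 0 (-1)) (mk 1 (m11 M / m10 M) 0 1)
  (mk 1 (- (m11 M / m10 M)) 0 1) (m10 M) (\det M / m10 M) r) => //.
- by bnd.
- by ent.
- by bnd.
- by ent.
- by ent.
- by ent.
- by ent.
- by ent.
- by rewrite (_ : \det _ = 1) ?oner_eq0 //; ent.
- by rewrite mulf_neq0 ?invr_eq0.
- by ent.
- by ent.
- by ent.
- by ent.
Qed.

Lemma case11 M r : \det M != 0 -> m11 M != 0 -> abs (m00 M) <= abs (m11 M) ->
  abs (m01 M) <= abs (m11 M) -> abs (m10 M) <= abs (m11 M) -> 0 <= r ->
  abs (\det M / m11 M) <= abs (m11 M) * r ^+ 2 -> concl M r.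
Proof.
move=> hdet hd ha hb hc hr hineq.
apply: (gen M (mk (-1) (- (m01 M / m11 M)) 0 (-1)) (mk (m10 M / m11 M) 1 (-1) 0)
  (mk 0 (-1) 1 (m10 M / m11 M)) (m11 M) (\det M / m11 M) r) => //.
- by bnd.
- by ent.
- by bnd.
- by ent.
- by ent.
- by ent.
- by ent.
- by ent.
- by rewrite (_ : \det _ = 1) ?oner_eq0 //; ent.
- by rewrite mulf_neq0 ?invr_eq0.
- by ent.
- by ent.
- by ent.
- by ent.
Qed.

Lemma final M : \det M != 0 -> concl M (pgl_norm abs M)^-1.
Proof.
move=> hdet.
set A := abs (m00 M); set B := abs (m01 M); set C := abs (m10 M); set D := abs (m11 M).
set mx := Num.max (Num.max A B) (Num.max C D).
have epgl : pgl_norm abs M = mx / Num.sqrt (abs (\det M)) by [].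
have hAm : A <= mx by rewrite /mx !le_max lexx ?orbT.
have hBm : B <= mx by rewrite /mx !le_max lexx ?orbT.
have hCm : C <= mx by rewrite /mx !le_max lexx ?orbT.
have hDm : D <= mx by rewrite /mx !le_max lexx ?orbT.
have hmx0 : mx != 0.
  apply/negP => /eqP h0.
  have z e : abs e <= mx -> e = 0.
    by move=> he; apply/abs_eq0/eqP; rewrite eq_le abs_ge0 andbT -h0.
  by move: hdet; rewrite det22 (z _ hAm) (z _ hBm) !mul0r subrr eqxx.
set r := (pgl_norm abs M)^-1.
have hr : 0 <= r.
  by rewrite /r invr_ge0 epgl divr_ge0 ?sqrtr_ge0 // (le_trans (abs_ge0 _) hAm).
have key p : abs p = mx -> abs (\det M / p) <= abs p * r ^+ 2.
  move=> hp; have hp0 : p != 0 by rewrite -abs_neq0 hp.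
  rewrite absM abs_inv // hp /r epgl invf_div expr_div_n sqr_sqrtr ?abs_ge0 //.
  rewrite le_eqVlt; apply/orP; left; apply/eqP; field; done.
have hmax (x y : R) : Num.max x y = x \/ Num.max x y = y.
  by case: leP; [right | left].
have nz p : abs p = mx -> p != 0 by move=> hp; rewrite -abs_neq0 hp.
have [e1|e1] := hmax (Num.max A B) (Num.max C D);
  [have [e2|e2] := hmax A B | have [e2|e2] := hmax C D].
{ have hm : mx = A by rewrite /mx e1 e2.
  apply: case00 => //.
  all: try (apply: nz; rewrite hm; done).
  all: try (apply: key; rewrite hm; done).
  all: change (abs (m00 M)) with A; rewrite -hm;
    first [exact: hAm | exact: hBm | exact: hCm | exact: hDm].
}
{ have hm : mx = B by rewrite /mx e1 e2.
  apply: case01 => //.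
  all: try (apply: nz; rewrite hm; done).
  all: try (apply: key; rewrite hm; done).
  all: change (abs (m01 M)) with B; rewrite -hm;
    first [exact: hAm | exact: hBm | exact: hCm | exact: hDm].
}
{ have hm : mx = C by rewrite /mx e1 e2.
  apply: case10 => //.
  all: try (apply: nz; rewrite hm; done).
  all: try (apply: key; rewrite hm; done).
  all: change (abs (m10 M)) with C; rewrite -hm;
    first [exact: hAm | exact: hBm | exact: hCm | exact: hDm].
}
{ have hm : mx = D by rewrite /mx e1 e2.
  apply: case11 => //.
  all: try (apply: nz; rewrite hm; done).
  all: try (apply: key; rewrite hm; done).
  all: change (abs (m11 M)) with D; rewrite -hm;
    first [exact: hAm | exact: hBm | exact: hCm | exact: hDm].
}
Qed.
End A.

Theorem proposition2p7 (R : realType) (k : fieldType) (abs : k -> R) :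
  complete_nonarch_valued_field abs ->
  forall M : 'M[k]_2, \det M != 0 ->
  exists Batt Brep : berk R k -> Prop,
    [/\ is_closed_ball abs (pgl_norm abs M)^-1 Batt,
        is_closed_ball abs (pgl_norm abs M)^-1 Brep &
        forall x, is_berk abs x -> ~ Brep x -> Batt (act abs M x)].
Proof.
move=> [[h0 h1 h2 h3] _ _ _] M hdet.
have := @final R k abs.
move=> F; apply: F => //.
Qed.
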